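(* Let $q$, $\phi,\theta$, $U_1$ and $a^*,b^*,c^*$ be as in the context. (i) For fixed $c>0$ let $\gamma(x)=\int_c^xdt/R_1(t,\lambda)$ and $U_2=(P_1\cos2\gamma+(Q_1/R_1)\sin2\gamma-(2/R_1)\cos2\gamma,\ Q_1\cos2\gamma+2\sin2\gamma,\ R_1\cos2\gamma)^T$, $U_3=(P_1\sin2\gamma-(Q_1/R_1)\cos2\gamma-(2/R_1)\sin2\gamma,\ Q_1\sin2\gamma-2\cos2\gamma,\ R_1\sin2\gamma)^T$; for any constants $\beta_2,\beta_3$, if $R$ is the third component of $\beta_2U_2+\beta_3U_3$, then for every $x_0>0$, $\lim_{N\to\infty}\int_{x_0}^NR\,dx\big/\int_{x_0}^NR_1\,dx=0$. (ii) $a^*(\lambda)>0$ and $c^*(\lambda)>0$ for all $\lambda\in(0,\infty)$.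
   Context: $-y''+qy=\lambda y$ on $(0,\infty)$, $\lambda>0$, $q(x)=\frac{q_0}{x^2}+\frac{q_1}{x}+\sum_{n\ge0}q_{n+2}x^n$ with real coefficients, series convergent on $(0,\infty)$, $q_0\ge-\tfrac14$, $q_0,q_1$ not both zero, $q\to0$ at $\infty$, and for some $x_0>0$ either $q\in L_1(x_0,\infty)$ or ($q'\in L_1(x_0,\infty)$, $q\in AC_{loc}[x_0,\infty)$). $\phi,\theta$: with $q_0=\nu^2-\frac14$, $\nu\ge0$, $\phi=x^{1/2+\nu}(1+\sum_{n\ge1}a_n(\lambda)x^n)$ is the Frobenius solution at $0$ for the larger indicial root, $y_2$ a second (possibly logarithmic) Frobenius solution with leading coefficient $1$ and coefficients real polynomials in $\lambda$, $C=W(\phi,y_2)\ne0$ real, $\theta=y_2/C$ so $W(\phi,\theta)=1$. Appell system: $(P,Q,R)'=M(P,Q,R)^T$, $M=\begin{pmatrix}0&\lambda-q&0\\-2&0&2(\lambda-q)\\0&-1&0\end{pmatrix}$; $U_1=(P_1,Q_1,R_1)^T$ is its unique solution with $\lim_{x\to\infty}U_1=(\sqrt\lambda,0,1/\sqrt\lambda)^T$ (and $R_1>0$ on $(0,\infty)$). $a^*,b^*,c^*$ are the real coefficients with $U_1=a^*((\theta')^2,-2\theta\theta',\theta^2)^T+b^*(\theta'\phi',-(\theta\phi'+\theta'\phi),\theta\phi)^T+c^*((\phi')^2,-2\phi\phi',\phi^2)^T$. *)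

(* Defs.v *)
From Stdlib Require Import Reals.
From Coquelicot Require Import Coquelicot.
Open Scope R_scope.

(* q(x) = q0/x^2 + q1/x + sum_{n>=0} q_{n+2} x^n ; qs n stands for q_{n+2}. *)
Definition qfun (q0 q1 : R) (qs : nat -> R) (x : R) : R :=
  q0 / x ^ 2 + q1 / x + PSeries qs x.

(* nu >= 0 with q0 = nu^2 - 1/4 *)
Definition nu_of (q0 : R) : R := sqrt (q0 + / 4).

Definition solves_SL (q : R -> R) (lam : R) (y : R -> R) : Prop :=
  forall x, 0 < x ->
    ex_derive y x /\ ex_derive (Derive y) x /\
    - Derive (Derive y) x + q x * y x = lam * y x.

Definition Wr (f g : R -> R) (x : R) : R := f x * Derive g x - Derive f x * g x.

Definition frobenius_phi (q : R -> R) (lam nu : R) (phi : R -> R) : Prop :=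
  solves_SL q lam phi /\
  exists a : nat -> R, a 0%nat = 1 /\ (forall x, 0 < x -> ex_pseries a x) /\
    forall x, 0 < x -> phi x = Rpower x (/ 2 + nu) * PSeries a x.

Definition frobenius_second (q : R -> R) (lam nu : R) (phi y2 : R -> R) : Prop :=
  solves_SL q lam y2 /\
  exists (kappa : R) (b : nat -> R),
    (forall x, 0 < x -> ex_pseries b x) /\
    (0 < nu -> b 0%nat = 1) /\ (nu = 0 -> kappa = 1) /\
    forall x, 0 < x -> y2 x = kappa * ln x * phi x + Rpower x (/ 2 - nu) * PSeries b x.

(* q in L1(x0,oo) or q' in L1(x0,oo) (q is real-analytic on (0,oo), so AC_loc) *)
Definition q_integrability (q : R -> R) : Prop :=
  exists x0, 0 < x0 /\
    (ex_RInt_gen (fun x => Rabs (q x)) (at_point x0) (Rbar_locally p_infty) \/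
     ex_RInt_gen (fun x => Rabs (Derive q x)) (at_point x0) (Rbar_locally p_infty)).

Definition appell_sol (q : R -> R) (lam : R) (P Q Rr : R -> R) : Prop :=
  forall x, 0 < x ->
    is_derive P x ((lam - q x) * Q x) /\
    is_derive Q x (-2 * P x + 2 * (lam - q x) * Rr x) /\
    is_derive Rr x (- Q x).

Definition appell_rep (P Q Rr th ph : R -> R) (a b c : R) : Prop :=
  forall x, 0 < x ->
    P x = a * (Derive th x) ^ 2 + b * (Derive th x * Derive ph x) + c * (Derive ph x) ^ 2 /\
    Q x = a * (-2 * th x * Derive th x) + b * (- (th x * Derive ph x + Derive th x * ph x))
          + c * (-2 * ph x * Derive ph x) /\
    Rr x = a * (th x) ^ 2 + b * (th x * ph x) + c * (ph x) ^ 2.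

Definition triple := (R * R * R)%type.

Definition gamma_fn (R1 : R -> R) (c x : R) : R := RInt (fun t => / R1 t) c x.

Definition U2 (P1 Q1 R1 : R -> R) (c x : R) : triple :=
  let g := gamma_fn R1 c x in
  (P1 x * cos (2 * g) + Q1 x / R1 x * sin (2 * g) - 2 / R1 x * cos (2 * g),
   Q1 x * cos (2 * g) + 2 * sin (2 * g),
   R1 x * cos (2 * g)).

Definition U3 (P1 Q1 R1 : R -> R) (c x : R) : triple :=
  let g := gamma_fn R1 c x in
  (P1 x * sin (2 * g) - Q1 x / R1 x * cos (2 * g) - 2 / R1 x * sin (2 * g),
   Q1 x * sin (2 * g) - 2 * cos (2 * g),
   R1 x * sin (2 * g)).

Definition lincomb3 (b2 : R) (u : triple) (b3 : R) (v : triple) : triple :=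
  (b2 * fst (fst u) + b3 * fst (fst v),
   b2 * snd (fst u) + b3 * snd (fst v),
   b2 * snd u + b3 * snd v).

Definition third (u : triple) : R := snd u.

(* Main.v *)
Require Import Defs.
From Stdlib Require Import Reals Lra Psatz.
From Coquelicot Require Import Coquelicot.
Open Scope R_scope.

Lemma exRInt_from (f : R -> R) (x0 a b : R) :
  (forall x, x0 <= x -> continuous f x) -> x0 <= a -> x0 <= b -> ex_RInt f a b.
Proof.
  intros Hc Ha Hb. apply (ex_RInt_continuous (V:=R_CompleteNormedModule)). intros z [Hz _]. apply Hc.
  apply Rle_trans with (2 := Hz). apply Rmin_glb; auto.
Qed.

Lemma cesaro0 (f : R -> R) (x0 : R) : 0 < x0 ->
  (forall x, x0 <= x -> continuous f x) -> is_lim f p_infty 0 ->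
  is_lim (fun N => RInt f x0 N / N) p_infty 0.
Proof.
  intros Hx0 Hc Hl. apply is_lim_spec in Hl. apply is_lim_spec. intros eps.
  assert (He : 0 < eps / 2) by (destruct eps; simpl; lra).
  destruct (Hl (mkposreal _ He)) as [M HM]. simpl in HM.
  set (M' := Rmax M x0 + 1).
  assert (HM'1 : M < M') by (unfold M'; generalize (Rmax_l M x0); lra).
  assert (HM'2 : x0 < M') by (unfold M'; generalize (Rmax_r M x0); lra).
  set (A := Rabs (RInt f x0 M')).
  assert (HA : 0 <= A) by apply Rabs_pos.
  exists (Rmax M' (2 * (A + 1) / eps)). intros N HN.
  assert (HN1 : M' < N) by (generalize (Rmax_l M' (2 * (A + 1) / eps)); lra).
  assert (HN2 : 2 * (A + 1) / eps < N) by (generalize (Rmax_r M' (2 * (A + 1) / eps)); lra).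
  assert (HNp : 0 < N) by lra.
  rewrite <- (RInt_Chasles f x0 M' N).
  2: apply (exRInt_from f x0); [exact Hc|lra|lra].
  2: apply (exRInt_from f x0); [exact Hc|lra|lra].
  assert (Hb : Rabs (RInt f M' N) <= (N - M') * (eps / 2)).
  { apply abs_RInt_le_const. lra. apply (exRInt_from f x0); [exact Hc|lra|lra].
    intros t Ht. assert (M < t) by lra. specialize (HM t H).
    rewrite Rminus_0_r in HM. lra. }
  change (plus (RInt f x0 M') (RInt f M' N)) with (RInt f x0 M' + RInt f M' N).
  rewrite Rminus_0_r. unfold Rdiv. rewrite Rabs_mult, Rabs_inv, (Rabs_pos_eq N) by lra.
  assert (Ht : Rabs (RInt f x0 M' + RInt f M' N) <= A + (N - M') * (eps / 2)).
  { eapply Rle_trans. apply Rabs_triang. fold A. lra. }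
  assert (HAN : 2 * (A + 1) < N * eps).
  { destruct eps as [e He']; simpl in *. apply Rmult_lt_compat_r with (r := e) in HN2; auto.
    unfold Rdiv in HN2. rewrite Rmult_assoc, Rinv_l in HN2 by lra. lra. }
  apply Rle_lt_trans with ((A + (N - M') * (eps / 2)) * / N).
  apply Rmult_le_compat_r. left; apply Rinv_0_lt_compat; lra. auto.
  apply Rmult_lt_reg_r with N; auto. rewrite Rmult_assoc, Rinv_l by lra.
  destruct eps as [e He']; simpl in *. nra.
Qed.

Lemma lim_invN : is_lim (fun N => / N) p_infty 0.
Proof. exact (is_lim_inv (fun y => y) p_infty p_infty (is_lim_id _) ltac:(discriminate)). Qed.

Lemma lim_mul (f g : R -> R) (x : Rbar) (a b : R) :
  is_lim f x a -> is_lim g x b -> is_lim (fun y => f y * g y) x (a * b).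
Proof. intros Hf Hg. exact (is_lim_mult f g x a b Hf Hg I). Qed.

Lemma bounded_mul (u v : R -> R) (K : R) :
  is_lim u p_infty 0 -> (forall x, Rabs (v x) <= K) -> is_lim (fun x => u x * v x) p_infty 0.
Proof.
  intros Hu Hv. apply is_lim_spec in Hu. apply is_lim_spec. intros eps.
  assert (HK : 0 <= K) by (eapply Rle_trans; [apply Rabs_pos|apply (Hv 0)]).
  assert (He : 0 < eps / (K+1)) by (destruct eps; simpl; apply Rdiv_lt_0_compat; lra).
  destruct (Hu (mkposreal _ He)) as [M HM]. exists M. intros x Hx.
  specialize (HM x Hx). simpl in HM.
  rewrite Rminus_0_r in *. rewrite Rabs_mult. specialize (Hv x).
  apply Rmult_lt_compat_r with (r := K + 1) in HM; [|lra].
  unfold Rdiv in HM; rewrite Rmult_assoc, Rinv_l, Rmult_1_r in HM by lra.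
  generalize (Rabs_pos (u x)) (Rabs_pos (v x)). nra.
Qed.

Lemma trig_bound (b2 b3 y : R) : Rabs (b2 * sin y - b3 * cos y) <= Rabs b2 + Rabs b3.
Proof.
  unfold Rminus. eapply Rle_trans. apply Rabs_triang.
  rewrite Rabs_Ropp, !Rabs_mult.
  generalize (Rabs_pos b2) (Rabs_pos b3).
  assert (Rabs (sin y) <= 1) by (apply Rabs_le; apply SIN_bound).
  assert (Rabs (cos y) <= 1) by (apply Rabs_le; apply COS_bound).
  generalize (Rabs_pos (sin y)) (Rabs_pos (cos y)). nra.
Qed.

Lemma part1core (P1 Q1 R1 g : R -> R) (l : R) (Hl : 0 < l)
  (HRd : forall x, 0 < x -> is_derive R1 x (- Q1 x))
  (HQd : forall x, 0 < x -> ex_derive Q1 x)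
  (HRp : forall x, 0 < x -> 0 < R1 x)
  (HQ1 : is_lim Q1 p_infty 0) (HR1 : is_lim R1 p_infty l)
  (Hg : forall x, 0 < x -> is_derive g x (/ R1 x))
  (b2 b3 x0 : R) (Hx0 : 0 < x0) :
  is_lim (fun N => RInt (fun x => b2 * (R1 x * cos (2 * g x)) + b3 * (R1 x * sin (2 * g x))) x0 N
                   / RInt R1 x0 N) p_infty 0.
Proof.
  set (Rf := fun x => b2 * (R1 x * cos (2 * g x)) + b3 * (R1 x * sin (2 * g x))).
  set (gg := fun x => R1 x * Q1 x * (b2 * sin (2 * g x) - b3 * cos (2 * g x))).
  set (H := fun x => R1 x ^ 2 * (b2 * sin (2 * g x) - b3 * cos (2 * g x)) / 2).
  assert (ER : forall x, 0 < x -> ex_derive R1 x) by (intros x Hx; eexists; apply HRd; auto).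
  assert (Eg : forall x, 0 < x -> ex_derive g x) by (intros x Hx; eexists; apply Hg; auto).
  assert (HH : forall x, 0 < x -> is_derive H x (Rf x - gg x)).
  { intros x Hx. unfold H, Rf, gg. auto_derive.
    - repeat split; auto.
    - change (Derive (fun x0 => R1 x0) x) with (Derive R1 x).
      change (Derive (fun x0 => g x0) x) with (Derive g x).
      rewrite (is_derive_unique _ _ _ (HRd x Hx)), (is_derive_unique _ _ _ (Hg x Hx)).
      specialize (HRp x Hx). field. lra. }
  assert (Cfg : forall x, 0 < x -> continuous (fun x => Rf x - gg x) x).
  { intros x Hx. apply (@ex_derive_continuous R_AbsRing R_NormedModule). unfold Rf, gg. auto_derive.
    repeat split; auto. }
  assert (Cgg : forall x, 0 < x -> continuous gg x).
  { intros x Hx. apply (@ex_derive_continuous R_AbsRing R_NormedModule). unfold gg. auto_derive.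
    repeat split; auto. }
  assert (CR : forall x, 0 < x -> continuous R1 x).
  { intros x Hx. apply (@ex_derive_continuous R_AbsRing R_NormedModule). auto. }
  assert (HI : forall N, x0 <= N -> RInt Rf x0 N = H N - H x0 + RInt gg x0 N).
  { intros N HN.
    assert (Hmin : 0 < Rmin x0 N) by (apply Rmin_glb_lt; lra).
    assert (e1 := is_RInt_derive H (fun x => Rf x - gg x) x0 N
                    (fun x Hx => HH x ltac:(lra)) (fun x Hx => Cfg x ltac:(lra))).
    assert (e2 := RInt_correct gg x0 N (exRInt_from gg x0 x0 N
                    (fun x Hx => Cgg x ltac:(lra)) (Rle_refl _) HN)).
    assert (e3 := is_RInt_plus _ _ _ _ _ _ e1 e2).
    apply is_RInt_unique. eapply is_RInt_ext; [|exact e3].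
    intros x _. change (plus (Rf x - gg x) (gg x) = Rf x). change (Rf x - gg x + gg x = Rf x). ring. }
  assert (LA : is_lim (fun N => RInt Rf x0 N / N) p_infty 0).
  { apply is_lim_ext_loc with (f := fun N => (H N * / N - H x0 * / N) + RInt gg x0 N / N).
    { exists x0. intros N HN. rewrite HI by lra. field. lra. }
    replace 0 with (0 - 0 + 0) by ring.
    apply is_lim_plus'; [apply is_lim_minus'|].
    - apply is_lim_ext with (f := fun N => (R1 N * R1 N * / N) * ((b2 * sin (2 * g N) - b3 * cos (2 * g N)) / 2)).
      { intros N. unfold H. unfold Rdiv. ring. }
      apply bounded_mul with (K := (Rabs b2 + Rabs b3) / 2).
      + replace 0 with (l * l * 0) by ring. apply lim_mul; [apply lim_mul|]; auto. apply lim_invN.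
      + intros N. unfold Rdiv. rewrite Rabs_mult, (Rabs_pos_eq (/2)) by lra.
        generalize (trig_bound b2 b3 (2 * g N)). lra.
    - replace 0 with (H x0 * 0) by ring. apply lim_mul. apply is_lim_const. apply lim_invN.
    - apply cesaro0; auto.
      + intros x Hx. apply Cgg. lra.
      + apply bounded_mul with (K := Rabs b2 + Rabs b3).
        * replace 0 with (l * 0) by ring. apply lim_mul; auto.
        * intros N. apply trig_bound. }
  assert (LB : is_lim (fun N => RInt R1 x0 N / N) p_infty l).
  { assert (CRl : forall x, x0 <= x -> continuous (fun x => R1 x - l) x).
    { intros x Hx. apply (@ex_derive_continuous R_AbsRing R_NormedModule). auto_derive. apply ER. lra. }
    apply is_lim_ext_loc with (f := fun N => RInt (fun x => R1 x - l) x0 N / N + (l - l * x0 * / N)).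
    { exists x0. intros N HN.
      assert (e1 := RInt_correct (fun x => R1 x - l) x0 N (exRInt_from _ x0 x0 N CRl (Rle_refl _) ltac:(lra))).
      assert (e2 := is_RInt_const (V := R_NormedModule) x0 N l).
      assert (e3 := is_RInt_plus _ _ _ _ _ _ e1 e2).
      assert (e4 : RInt R1 x0 N = RInt (fun x => R1 x - l) x0 N + (N - x0) * l).
      { apply is_RInt_unique. eapply is_RInt_ext; [|exact e3].
        intros x _. change (R1 x - l + l = R1 x). ring. }
      rewrite e4. field. lra. }
    cut (is_lim (fun N => RInt (fun x => R1 x - l) x0 N / N + (l - l * x0 * / N)) p_infty (0 + (l - l * x0 * 0))).
    { replace (0 + (l - l * x0 * 0)) with l by ring; auto. }
    apply is_lim_plus'. apply cesaro0; auto.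
    - replace 0 with (l - l) by ring. apply is_lim_minus'; auto. apply is_lim_const.
    - apply is_lim_minus'. apply is_lim_const. apply lim_mul. apply is_lim_const. apply lim_invN. }
  apply is_lim_ext_loc with (f := fun N => (RInt Rf x0 N / N) / (RInt R1 x0 N / N)).
  { exists 0. intros N HN. unfold Rdiv. rewrite Rinv_mult, Rinv_inv.
    transitivity (RInt Rf x0 N * / RInt R1 x0 N * (N * / N)). ring.
    rewrite Rinv_r by lra. ring. }
  replace (Finite 0) with (Rbar_div (Finite 0) (Finite l)).
  2: { simpl. f_equal. field. lra. }
  apply is_lim_div; auto.
  - intro E. injection E. lra.
  - exact I.
Qed.

Lemma lim_sub (f g : R -> R) (x : Rbar) (a b : R) :
  is_lim f x a -> is_lim g x b -> is_lim (fun y => f y - g y) x (a - b).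
Proof. apply is_lim_minus'. Qed.

Lemma lim_cst_mul (f : R -> R) (x : Rbar) (a k : R) :
  is_lim f x a -> is_lim (fun y => f y * k) x (a * k).
Proof. intros H. apply lim_mul; auto. apply is_lim_const. Qed.

Lemma ev_pos (f : R -> R) (l : R) : is_lim f p_infty l -> 0 < l ->
  exists M, forall x, M < x -> l/2 < f x.
Proof.
  intros H Hl. apply is_lim_spec in H.
  assert (He : 0 < l/2) by lra.
  destruct (H (mkposreal _ He)) as [M HM]. exists M. intros x Hx.
  specialize (HM x Hx). simpl in HM. apply Rabs_def2 in HM. lra.
Qed.

Lemma part2 (a b c lam : R) (P Q Rr th ph : R -> R)
  (Hrep : appell_rep P Q Rr th ph a b c)
  (HW : forall x, 0 < x -> ph x * Derive th x - Derive ph x * th x = 1)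
  (Hlam : 0 < lam)
  (HP : is_lim P p_infty (sqrt lam))
  (HQ : is_lim Q p_infty 0)
  (HR : is_lim Rr p_infty (/ sqrt lam)) :
  0 < a /\ 0 < c /\ forall x, 0 < x -> 0 < Rr x.
Proof.
  assert (Hs : 0 < sqrt lam) by (apply sqrt_lt_R0; lra).
  assert (Hid : forall x, 0 < x -> P x * Rr x - Q x * Q x / 4 = a * c - b * b / 4).
  { intros x Hx. destruct (Hrep x Hx) as [E1 [E2 E3]]. specialize (HW x Hx).
    rewrite E1, E2, E3.
    set (T := th x) in *; set (F := ph x) in *; set (T' := Derive th x) in *;
    set (F' := Derive ph x) in *.
    replace (a * c - b * b / 4) with ((a * c - b * b / 4) * (F * T' - F' * T)^2)
      by (rewrite HW; field).
    field. }
  assert (HD : a * c - b * b / 4 = 1).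
  { assert (L : is_lim (fun x => P x * Rr x - Q x * Q x / 4) p_infty 1).
    { replace 1 with (sqrt lam * / sqrt lam - 0 * 0 * / 4) by (field; lra).
      apply lim_sub. apply lim_mul; auto.
      apply (is_lim_ext (fun y => Q y * Q y * / 4)). intro; unfold Rdiv; ring.
      apply lim_cst_mul. apply lim_mul; auto. }
    apply is_lim_ext_loc with (g := fun _ => a * c - b * b / 4) in L.
    2:{ exists 0. intros x Hx. apply Hid. lra. }
    apply is_lim_unique in L. rewrite Lim_const in L. injection L; auto. }
  assert (Hpos : forall x, 0 < x -> 4 * a * Rr x = (2 * a * th x + b * ph x)^2 + 4 * (ph x)^2).
  { intros x Hx. destruct (Hrep x Hx) as [_ [_ E3]]. rewrite E3.
    replace (4 * (ph x)^2) with (4 * (a*c - b*b/4) * (ph x)^2) by (rewrite HD; field). field. }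
  assert (Hnz : forall x, 0 < x -> (2 * a * th x + b * ph x)^2 + 4 * (ph x)^2 > 0).
  { intros x Hx. specialize (HW x Hx).
    destruct (Req_dec (ph x) 0) as [E|E].
    - rewrite E in *. assert (th x <> 0) by (intro E'; rewrite E' in HW; lra).
      assert (a <> 0) by (intro E'; rewrite E' in HD; nra).
      assert (2 * a * th x + b * 0 <> 0) by (intro E'; apply H; nra).
      assert (0 < (2 * a * th x + b * 0)^2) by (apply pow2_gt_0; auto). lra.
    - assert (0 < ph x ^2) by (apply pow2_gt_0; auto). assert (0 <= (2 * a * th x + b * ph x)^2) by apply pow2_ge_0. lra. }
  destruct (ev_pos Rr _ HR) as [M HM]. { apply Rinv_0_lt_compat; auto. }
  set (x1 := Rmax M 0 + 1).
  assert (Hx1 : 0 < x1) by (unfold x1; generalize (Rmax_r M 0); lra).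
  assert (HRx1 : 0 < Rr x1).
  { assert (M < x1) by (unfold x1; generalize (Rmax_l M 0); lra).
    specialize (HM x1 H). assert (0 < / sqrt lam) by (apply Rinv_0_lt_compat; auto). lra. }
  assert (Ha : 0 < a).
  { specialize (Hpos x1 Hx1). specialize (Hnz x1 Hx1). nra. }
  split; [exact Ha|split].
  - nra.
  - intros x Hx. specialize (Hpos x Hx). specialize (Hnz x Hx). nra.
Qed.


Theorem mainTheorem9
  (q0 q1 : R) (qs : nat -> R)
  (Hconv : forall x, 0 < x -> ex_pseries qs x)
  (Hq0 : - / 4 <= q0) (Hq01 : q0 <> 0 \/ q1 <> 0)
  (Hqlim : is_lim (qfun q0 q1 qs) p_infty 0)
  (Hqint : q_integrability (qfun q0 q1 qs))
  (lam : R) (Hlam : 0 < lam)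
  (phi y2 : R -> R)
  (Hphi : frobenius_phi (qfun q0 q1 qs) lam (nu_of q0) phi)
  (Hy2 : frobenius_second (qfun q0 q1 qs) lam (nu_of q0) phi y2)
  (C : R) (HC : C <> 0) (HW : forall x, 0 < x -> Wr phi y2 x = C)
  (P1 Q1 R1 : R -> R)
  (HU1 : appell_sol (qfun q0 q1 qs) lam P1 Q1 R1)
  (HP1 : is_lim P1 p_infty (sqrt lam))
  (HQ1 : is_lim Q1 p_infty 0)
  (HR1 : is_lim R1 p_infty (/ sqrt lam))
  (astar bstar cstar : R)
  (Hrep : appell_rep P1 Q1 R1 (fun t => y2 t / C) phi astar bstar cstar) :
  (forall c : R, 0 < c -> forall beta2 beta3 : R, forall x0 : R, 0 < x0 ->
     is_lim (fun N =>
               RInt (fun x => third (lincomb3 beta2 (U2 P1 Q1 R1 c x) beta3 (U3 P1 Q1 R1 c x))) x0 N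
               / RInt R1 x0 N)
            p_infty 0)
  /\ 0 < astar /\ 0 < cstar.
Proof.
  assert (HW' : forall x, 0 < x -> phi x * Derive (fun t => y2 t / C) x - Derive phi x * (y2 x / C) = 1).
  { intros x Hx. specialize (HW x Hx). unfold Wr in HW.
    change (fun t => y2 t / C) with (fun t => y2 t * / C). rewrite Derive_scal_l.
    rewrite <- HW. field. rewrite HW. auto. }
  destruct (part2 astar bstar cstar lam P1 Q1 R1 (fun t => y2 t / C) phi Hrep HW' Hlam HP1 HQ1 HR1)
    as [Ha [Hc Hpos]].
  split; [|split; auto].
  assert (Hs : 0 < sqrt lam) by (apply sqrt_lt_R0; lra).
  intros c Hc0 b2 b3 x0 Hx0.
  assert (HRd : forall x, 0 < x -> is_derive R1 x (- Q1 x)).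
  { intros x Hx. destruct (HU1 x Hx) as [_ [_ H3]]. exact H3. }
  assert (HQd : forall x, 0 < x -> ex_derive Q1 x).
  { intros x Hx. destruct (HU1 x Hx) as [_ [H2 _]]. eexists; exact H2. }
  assert (Cinv : forall x, 0 < x -> continuous (fun t => / R1 t) x).
  { intros x Hx. apply (@ex_derive_continuous R_AbsRing R_NormedModule). auto_derive.
    split. eexists; apply HRd; auto. split; auto. specialize (Hpos x Hx). lra. }
  assert (Hg : forall x, 0 < x -> is_derive (gamma_fn R1 c) x (/ R1 x)).
  { intros x Hx. apply (is_derive_RInt (fun t => / R1 t) (gamma_fn R1 c) c x).
    - assert (Hx2 : 0 < x / 2) by lra.
      exists (mkposreal _ Hx2). intros y Hy.
      change (Rabs (y - x) < x / 2) in Hy. apply Rabs_def2 in Hy.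
      apply (RInt_correct (V := R_CompleteNormedModule)).
      apply (ex_RInt_continuous (V:=R_CompleteNormedModule)).
      intros z [Hz _]. apply Cinv.
      apply Rlt_le_trans with (2 := Hz). apply Rmin_glb_lt; lra.
    - apply Cinv; auto. }
  eapply is_lim_ext; [|apply (part1core P1 Q1 R1 (gamma_fn R1 c) (/ sqrt lam)
        ltac:(apply Rinv_0_lt_compat; auto) HRd HQd Hpos HQ1 HR1 Hg b2 b3 x0 Hx0)].
  intro N. reflexivity.
Qed.
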